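(* There exists a fragile graph containing no cycle of length $4$ and having chromatic number $4$.
   Context: All graphs are finite and simple. A graph is $k$-connected if it has at least $k+1$ vertices and no vertex cutset with at most $k-1$ vertices. A graph is fragile if it has no $3$-connected subgraph. *)

(* Defs.v *)
From mathcomp Require Import all_boot.
Set Implicit Arguments. Unset Strict Implicit. Unset Printing Implicit Defensive.

Section Graphs.
Variable T : finType.

Definition simple_graph (e : rel T) : Prop :=
  (forall x y, e x y = e y x) /\ (forall x, ~~ e x x).

Definition is_subgraph (e : rel T) (S : {set T}) (f : rel T) : Prop :=
  simple_graph f /\ (forall x y, f x y -> [&& x \in S, y \in S & e x y]).

Definition restr (f : rel T) (R : {set T}) : rel T :=
  [rel x y | [&& f x y, x \in R & y \in R]].

Definition connected_on (f : rel T) (R : {set T}) : Prop :=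
  forall x y, x \in R -> y \in R -> connect (restr f R) x y.

Definition k_connected (k : nat) (S : {set T}) (f : rel T) : Prop :=
  k < #|S| /\
  forall C : {set T}, C \subset S -> #|C| < k -> connected_on f (S :\: C).

Definition fragile (e : rel T) : Prop :=
  ~ exists (S : {set T}) (f : rel T), is_subgraph e S f /\ k_connected 3 S f.

Definition has_C4 (e : rel T) : Prop :=
  exists a b c d : T,
    uniq [:: a; b; c; d] /\ [&& e a b, e b c, e c d & e d a].

Definition colorable (e : rel T) (k : nat) : Prop :=
  exists col : T -> 'I_k, forall x y, e x y -> col x != col y.

Definition chromatic_number_is (e : rel T) (k : nat) : Prop :=
  colorable e k /\ forall j, j < k -> ~ colorable e j.

End Graphs.

(* Main.v *)
Require Import Defs.
From mathcomp Require Import all_boot.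
Set Implicit Arguments. Unset Strict Implicit. Unset Printing Implicit Defensive.

(* The graph: two copies of a 10-vertex C4-free "equality
   gadget" glued at one vertex, plus an edge closing it up. *)
Definition edges : seq (nat * nat) :=
  [:: (0, 1); (0, 2); (0, 3); (1, 2); (1, 7); (2, 5); (3, 4); (3, 6); (4, 5);
      (4, 6); (5, 8); (5, 9); (6, 7); (7, 8); (8, 9); (10, 11); (10, 12);
      (10, 13); (11, 12); (11, 9); (12, 15); (13, 14); (13, 16); (14, 15);
      (14, 16); (15, 17); (15, 18); (16, 9); (9, 17); (17, 18); (7, 18)].

Definition adjn (i j : nat) : bool := ((i, j) \in edges) || ((j, i) \in edges).

Definition E : rel 'I_19 := fun x y => adjn x y.

Lemma adjn_sym i j : adjn i j = adjn j i.
Proof. by rewrite /adjn orbC. Qed.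

Lemma edges_irr : all (fun p => p.1 != p.2) edges.
Proof. by []. Qed.

Lemma edges_bnd : all (fun p => (p.1 < 19) && (p.2 < 19)) edges.
Proof. by []. Qed.

Lemma adjn_irr i : ~~ adjn i i.
Proof.
rewrite /adjn orbb; apply/negP => Hi.
by move/allP: edges_irr => /(_ _ Hi) /=; rewrite eqxx.
Qed.

Lemma iotaP (P : pred nat) : all P (iota 0 19) -> forall x : 'I_19, P x.
Proof. by move=> /allP H x; apply: H; rewrite mem_iota add0n leq0n ltn_ord. Qed.

Definition noC4b : bool :=
  all (fun a => all (fun b => if adjn a b then all (fun c => if adjn b c then
    all (fun d => adjn c d ==> adjn d a ==> ~~ uniq [:: a; b; c; d])
      (iota 0 19) else true) (iota 0 19) else true) (iota 0 19)) (iota 0 19).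

Lemma noC4b_true : noC4b.
Proof. by vm_compute. Qed.

Lemma allPi (P : pred nat) x : all P (iota 0 19) -> x < 19 -> P x.
Proof. by move=> /allP H Hx; apply: H; rewrite mem_iota add0n leq0n Hx. Qed.

Lemma noC4 : ~ has_C4 E.
Proof.
move=> [a [b [c [d [U /and4P [Hab Hbc Hcd Hda]]]]]].
rewrite /E in Hab Hbc Hcd Hda.
have H1 := allPi noC4b_true (ltn_ord a).
have H2 := allPi H1 (ltn_ord b); cbv beta in H2; rewrite Hab in H2; cbv iota in H2.
have H3 := allPi H2 (ltn_ord c); cbv beta in H3; rewrite Hbc in H3; cbv iota in H3.
have H4 := implyP (implyP (allPi H3 (ltn_ord d)) Hcd) Hda.
have E4 : [:: val a; val b; val c; val d] = map val [:: a; b; c; d] by [].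
by move: H4; rewrite E4 (map_inj_uniq val_inj) U.
Qed.

Definition cols : seq nat := [:: 0; 1; 2; 1; 0; 1; 2; 0; 2; 0; 0; 1; 2; 1; 0; 1; 2; 2; 3].

Definition colb : bool :=
  all (fun a => (nth 0 cols a < 4) && all (fun b => adjn a b ==> (nth 0 cols a != nth 0 cols b))
    (iota 0 19)) (iota 0 19).

Lemma colb_true : colb.
Proof. by vm_compute. Qed.

Lemma col4 : colorable E 4.
Proof.
exists (fun x : 'I_19 => (inord (nth 0 cols x) : 'I_4)) => x y Hxy.
have /andP [Hx Hy] := allPi colb_true (ltn_ord x).
have /andP [Hy' _] := allPi colb_true (ltn_ord y).
have Hne := implyP (allPi Hy (ltn_ord y)) Hxy.
apply/eqP => /(congr1 val) /=; rewrite !inordK //.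
by apply/eqP.
Qed.

Definition consistent (s : seq nat) : bool :=
  all (fun p => ~~ [&& p.1 < size s, p.2 < size s & nth 0 s p.1 == nth 0 s p.2]) edges.

Fixpoint nocol (k : nat) (s : seq nat) : bool :=
  if ~~ consistent s then true else
  (if k is k'.+1 then all (fun c => nocol k' (rcons s c)) [:: 0; 1; 2] else false).

Lemma nocol_sound k : forall s (c : nat -> nat), (forall i, c i < 3) ->
  (forall i, i < size s -> nth 0 s i = c i) -> nocol k s ->
  exists2 p, p \in edges & c p.1 = c p.2.
Proof.
have incons : forall s (c : nat -> nat),
  (forall i, i < size s -> nth 0 s i = c i) -> ~~ consistent s ->
  exists2 p, p \in edges & c p.1 = c p.2.
  move=> s c Hs /allPn [p Hp]; rewrite negbK => /and3P [H1 H2 /eqP H3].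
  by exists p => //; rewrite -(Hs _ H1) -(Hs _ H2).
elim: k => [|k IH] s c Hc Hs H.
  change (is_true (if ~~ consistent s then true else false)) in H.
  by move: H; case: ifP => // Hn _; apply: (incons s c Hs); rewrite Hn.
change (is_true (if ~~ consistent s then true else all (fun c => nocol k (rcons s c)) [:: 0; 1; 2])) in H.
move: H; case: ifP => [Hn _ | _ /allP Hall]; first exact: (incons s c Hs Hn).
have Hm : c (size s) \in [:: 0; 1; 2].
  by move: (Hc (size s)); case: (c (size s)) => [|[|[|]]].
apply: (IH (rcons s (c (size s))) c Hc _ (Hall _ Hm)).
move=> i; rewrite size_rcons ltnS leq_eqVlt => /orP [/eqP -> | Hi].
  by rewrite nth_rcons ltnn eqxx.
by rewrite nth_rcons Hi; apply: Hs.
Qed.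

Lemma nocol19 : nocol 19 [::].
Proof. by vm_compute. Qed.

Lemma not_col j : j < 4 -> ~ colorable E j.
Proof.
move=> Hj [col Hcol].
pose c := fun i => if i < 19 then nat_of_ord (col (inord i)) else 0.
have Hc : forall i, c i < 3.
  move=> i; rewrite /c; case: ifP => // _.
  by apply: leq_trans (ltn_ord _) _; rewrite -ltnS.
have [p Hp Heq] : exists2 p, p \in edges & c p.1 = c p.2.
  by apply: (@nocol_sound 19 [::] c Hc) => //; exact: nocol19.
move/allP: edges_bnd => /(_ _ Hp) /andP [H1 H2].
have HE : E (inord p.1) (inord p.2).
  by rewrite /E /= !inordK // /adjn -surjective_pairing Hp.
move: (Hcol _ _ HE); rewrite /c H1 H2 in Heq.
by apply/negP; rewrite negbK; apply/eqP; apply: val_inj.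
Qed.

Definition peel1 (W : seq nat) := filter (fun x => 2 < count (adjn x) W) W.
Definition peel (W : seq nat) := iter 19 peel1 W.

Inductive cert := Leaf | Split of seq nat & seq nat & cert & cert.

Definition Cw (W : seq nat) (C : seq nat) := filter (fun x => x \in C) W.
Definition Aw (W : seq nat) (C A : seq nat) := filter (fun x => (x \in A) && (x \notin C)) W.
Definition Bw (W : seq nat) (C A : seq nat) := filter (fun x => (x \notin A) && (x \notin C)) W.
Definition Lw (W : seq nat) (C A : seq nat) := filter (fun x => (x \in A) || (x \in C)) W.
Definition Rw (W : seq nat) (C A : seq nat) := filter (fun x => (x \notin A) || (x \in C)) W.

Fixpoint check (W : seq nat) (c : cert) : bool :=
  if size (peel W) < 4 then true else
  match c with
  | Leaf => false
  | Split C A l r =>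
    [&& size (Cw (peel W) C) < 3,
        all (fun x => all (fun y => ~~ adjn x y) (Bw (peel W) C A)) (Aw (peel W) C A),
        check (Lw (peel W) C A) l &
        check (Rw (peel W) C A) r]
  end.

Lemma check_eq W c : check W c =
  if size (peel W) < 4 then true else
  match c with
  | Leaf => false
  | Split C A l r =>
    [&& size (Cw (peel W) C) < 3,
        all (fun x => all (fun y => ~~ adjn x y) (Bw (peel W) C A)) (Aw (peel W) C A),
        check (Lw (peel W) C A) l &
        check (Rw (peel W) C A) r]
  end.
Proof. by case: c. Qed.

Definition thecert := Split [:: 5; 7] [:: 0; 1; 2; 3; 4; 6] Leaf Leaf.

Lemma check_true : check (iota 0 19) thecert.
Proof. by vm_compute. Qed.

Definition Q (S : {set 'I_19}) : Prop :=
  3 < #|S| /\ (forall x, x \in S -> 2 < #|[set y in S | E x y]|) /\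
  (forall C : {set 'I_19}, C \subset S -> #|C| < 3 -> connected_on E (S :\: C)).

Lemma card_le (A : {set 'I_19}) (W : seq nat) :
  (forall x, x \in A -> val x \in W) -> #|A| <= size W.
Proof.
move=> H; rewrite cardE -(size_map val); apply: uniq_leq_size.
  by rewrite (map_inj_uniq val_inj) enum_uniq.
by move=> i /mapP [x Hx ->]; apply: H; rewrite mem_enum in Hx.
Qed.

Lemma peel_sound S W : Q S -> (forall x, x \in S -> val x \in W) ->
  forall x, x \in S -> val x \in peel W.
Proof.
move=> [_ [Hdeg _]] HW; rewrite /peel.
have step : forall W0, (forall x, x \in S -> val x \in W0) ->
    forall x, x \in S -> val x \in peel1 W0.
  move=> W0 HW0 x Hx; rewrite /peel1 mem_filter HW0 // andbT.
  apply: leq_trans (Hdeg x Hx) _; rewrite -size_filter; apply: card_le.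
  by move=> y; rewrite inE mem_filter => /andP [Hy Hxy]; rewrite [adjn _ _]Hxy HW0.
have gen : forall k, forall x, x \in S -> val x \in iter k peel1 W.
  by elim => [|k IH] //=; apply: step.
exact: gen.
Qed.

Lemma check_sound c : forall W (S : {set 'I_19}), (forall x, x \in S -> val x \in W) -> Q S ->
  check W c -> False.
Proof.
elim: c => [|C A l IHl r IHr] W S HW HQ;
  have HW' := peel_sound HQ HW; rewrite check_eq; cbv iota;
  move: (peel W) HW' => W' HW'; case: HQ => [Hcard [Hdeg Hconn]].
  case: ifP => // Hs _.
  by have := leq_ltn_trans (card_le HW') Hs; rewrite ltnS leqNgt Hcard.
case: ifP => [Hs _|_].
  by have := leq_ltn_trans (card_le HW') Hs; rewrite ltnS leqNgt Hcard.
case/and4P => [HC Hno Hl Hr].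
have HQ : Q S by [].
case: (boolP [forall x in S, (val x \in A) || (val x \in C)]) => [/forall_inP HA | HA].
  apply: (IHl _ S _ HQ Hl) => x Hx; rewrite /Lw mem_filter HW' //.
  by rewrite HA.
case: (boolP [forall x in S, (val x \notin A) || (val x \in C)]) => [/forall_inP HB | HB].
  apply: (IHr _ S _ HQ Hr) => x Hx; rewrite /Rw mem_filter HW' //.
  by rewrite HB.
have [y Hy HyB] : exists2 y, y \in S & ~~ ((val y \in A) || (val y \in C)).
  by apply/exists_inP; rewrite -negb_forall_in.
have [x Hx HxA] : exists2 x, x \in S & ~~ ((val x \notin A) || (val x \in C)).
  by apply/exists_inP; rewrite -negb_forall_in.
set C0 := [set z in S | val z \in C].
have HC0S : C0 \subset S by apply/subsetP => z; rewrite inE => /andP [].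
have HC0 : #|C0| < 3.
  apply: leq_ltn_trans HC; apply: card_le => z; rewrite inE => /andP [Hz Hzc].
  by rewrite /Cw mem_filter Hzc HW'.
have Hxin : x \in S :\: C0.
  by rewrite !inE Hx andbT; move: HxA; rewrite negb_or negbK => /andP [_ ->].
have Hyin : y \in S :\: C0.
  by rewrite !inE Hy andbT; move: HyB; rewrite negb_or => /andP [_ ->].
have := Hconn _ HC0S HC0 x y Hxin Hyin.
move/connectP => [p Hp Hlast].
have HxA' : val x \in A by move: HxA; rewrite negb_or negbK => /andP [].
suff : val y \in A by move: HyB; rewrite negb_or => /andP [/negP].
rewrite Hlast; elim: p x Hxin HxA' Hp {Hlast Hx HxA} => [|z p IHp] u Hu HuA //=.
case/andP => [/and3P [Huz Hu' Hz] Hp].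
apply: (IHp z Hz _ Hp).
case: (boolP (val z \in A)) => // HzA; exfalso.
move/allP: Hno => /(_ (val u)).
have -> : val u \in Aw W' C A.
  rewrite /Aw mem_filter HuA /=; move: Hu'; rewrite !inE => /andP [Hn HuS].
  by rewrite HW' // andbT; move: Hn; rewrite HuS.
move=> /(_ isT) /allP /(_ (val z)).
have -> : val z \in Bw W' C A.
  rewrite /Bw mem_filter HzA /=; move: Hz; rewrite !inE => /andP [Hn HzS].
  by rewrite HW' // andbT; move: Hn; rewrite HzS.
by move=> /(_ isT); rewrite [adjn _ _]Huz.
Qed.

Lemma fragileE : fragile E.
Proof.
move=> [S [f [[[Hfsym Hfirr] Hfe] [Hcard Hk]]]].
suff HQ : Q S.
  by apply: (check_sound (W := iota 0 19) _ HQ check_true) => x _;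
     rewrite mem_iota add0n leq0n ltn_ord.
split; first exact: Hcard.
split; last first.
  move=> C HC HC3 x y Hx Hy.
  apply: (connect_sub _ (Hk C HC HC3 x y Hx Hy)) => u v /and3P [Huv Hu Hv].
  apply: connect1; rewrite /restr /= Hu Hv andbT.
  by case/and3P: (Hfe _ _ Huv) => _ _ ->.
move=> x Hx; rewrite ltnNge; apply/negP => HN.
set N := [set y in S | E x y] in HN.
have HNS : N \subset S by apply/subsetP => z; rewrite inE => /andP [].
have HxN : x \in S :\: N by rewrite !inE Hx andbT /E adjn_irr.
have [y Hy Hyx] : exists2 y, y \in S :\: N & y \notin [set x].
  apply/subsetPn; apply/negP => Hsub.
  have := subset_leq_card Hsub; rewrite cards1 => H1.
  have := leq_add (leq_trans (subset_leq_card (subsetIr S N)) HN) H1.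
  by rewrite (cardsID N S) leqNgt Hcard.
have := Hk N HNS HN x y HxN Hy.
move/connectP => [[|z p] Hp Hl].
  by move: Hyx; rewrite Hl inE eqxx.
move: Hp => /= /andP [/and3P [Hxz _ Hz] _].
move: Hz; rewrite !inE => /andP [].
case/and3P: (Hfe _ _ Hxz) => _ -> ->.
by [].
Qed.

Theorem mainTheorem7 :
  exists (n : nat) (e : rel 'I_n),
    simple_graph e /\ fragile e /\ ~ has_C4 e /\ chromatic_number_is e 4.
Proof.
exists 19, E; split.
  by split => [x y | x]; [exact: adjn_sym | exact: adjn_irr].
split; first exact: fragileE.
split; first exact: noC4.
split; first exact: col4.
exact: not_col.
Qed.
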